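(* Let $G$ be a finite graph, $k$ a positive integer, $c$ a $k$-colouring of $G$, and $u,v\in V(G)$ with $|C_{c,u}|\ge 2$ and $|C_{c,v}|\ge 2$. Let $c_u\in C_{c,u}$ and $c_v\in C_{c,v}$. If $uv\notin E(G)$, then $|C_{c_u,v}|\ge 2$ and $|C_{c_v,u}|\ge 2$.
   Context: A $k$-colouring of $G$ is a map $c:V(G)\to\{1,\dots,k\}$ with $c(x)\neq c(y)$ for every edge $xy$. For a $k$-colouring $c$ and $u\in V(G)$, $C_{c,u}$ denotes the set of $k$-colourings of $G$ that differ from $c$ exactly at the vertex $u$. *)

(* Defs.v *)
From mathcomp Require Import all_boot.
Set Implicit Arguments. Unset Strict Implicit. Unset Printing Implicit Defensive.

(* A finite simple graph: vertex set a finType T, adjacency e : rel T that is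
   symmetric and irreflexive. Colours {1,...,k} are represented by 'I_k. *)
Definition simple_graph (T : finType) (e : rel T) : Prop :=
  symmetric e /\ irreflexive e.

Definition proper_colouring (T : finType) (e : rel T) (k : nat)
  (c : {ffun T -> 'I_k}) : bool :=
  [forall x, forall y, e x y ==> (c x != c y)].

(* C_{c,u}: the k-colourings of G differing from c exactly at u. *)
Definition recol_at (T : finType) (e : rel T) (k : nat)
  (c : {ffun T -> 'I_k}) (u : T) : {set {ffun T -> 'I_k}} :=
  [set d | [&& proper_colouring e d, d u != c u &
             [forall x, (x != u) ==> (d x == c x)]]].

(* Main.v *)
Require Import Defs.
From mathcomp Require Import all_boot.

Lemma recolP (T : finType) (e : rel T) (k : nat) (c d : {ffun T -> 'I_k}) (u : T) :
  reflect [/\ (forall x y, e x y -> d x != d y), d u != c u &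
             (forall x, x != u -> d x = c x)] (d \in recol_at e c u).
Proof.
rewrite inE /proper_colouring; apply: (iffP and3P).
- case=> /forallP H1 H2 /forallP H3; split => //.
  + by move=> x y exy; have /forallP/(_ y)/implyP := H1 x; apply.
  + by move=> x xu; apply/eqP; exact: (implyP (H3 x) xu).
- case=> H1 H2 H3; split => //.
  + by apply/forallP=> x; apply/forallP=> y; apply/implyP; exact: H1.
  + by apply/forallP=> x; apply/implyP=> xu; rewrite H3.
Qed.

Lemma key (T : finType) (e : rel T) (k : nat)
  (c : {ffun T -> 'I_k}) (u v : T) (cu : {ffun T -> 'I_k}) :
  simple_graph e -> proper_colouring e c -> cu \in recol_at e c u -> ~~ e u v ->
  #|recol_at e c v| <= #|recol_at e cu v|.
Proof.
move=> [esym eirr] cP /recolP [cuP cuu cuo] nuv.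
have [uv|uv] := eqVneq u v.
- subst v.
  pose f (d : {ffun T -> 'I_k}) := if d == cu then c else d.
  have finj : {in recol_at e c u &, injective f}.
    move=> d1 d2 /recolP [_ d1u _] /recolP [_ d2u _]; rewrite /f.
    case: eqVneq => [->|h1]; case: eqVneq => [->|h2] //.
    + by move=> E; rewrite E eqxx in d2u.
    + by move=> E; rewrite -E eqxx in d1u.
  rewrite -(card_in_imset finj); apply: subset_leq_card.
  apply/subsetP=> _ /imsetP [d /recolP [dP du dO] ->]; rewrite /f.
  case: eqVneq => [_|dn].
  + apply/recolP; split.
    * by move=> x y exy; move/forallP: cP => /(_ x)/forallP/(_ y)/implyP; apply.
    * by rewrite eq_sym.
    * by move=> x xu; rewrite cuo.
  + apply/recolP; split => //.
    * apply/negP=> /eqP E; move/eqP: dn; apply; apply/ffunP=> x.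
      have [->|xu] := eqVneq x u; first by [].
      by rewrite dO // cuo.
    * by move=> x xu; rewrite dO // cuo.
- pose f (d : {ffun T -> 'I_k}) := [ffun x => if x == u then cu u else d x].
  have finj : {in recol_at e c v &, injective f}.
    move=> d1 d2 /recolP [_ _ d1o] /recolP [_ _ d2o] E; apply/ffunP=> x.
    have := congr1 (fun g : {ffun T -> 'I_k} => g x) E; rewrite /f !ffunE.
    case: eqVneq => [->|//] _; by rewrite d1o // d2o.
  rewrite -(card_in_imset finj); apply: subset_leq_card.
  apply/subsetP=> _ /imsetP [d /recolP [dP dv dO] ->]; apply/recolP; split.
  + move=> x y exy; rewrite /f !ffunE.
    have [xu|xu] := eqVneq x u; have [yu|yu] := eqVneq y u.
    * by subst x y; rewrite eirr in exy.
    * subst x; have yv : y != v by apply/negP=> /eqP yv; subst y; rewrite exy in nuv.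
      by rewrite dO // -(cuo y yu); exact: cuP.
    * subst y; have xv : x != v.
        by apply/negP=> /eqP xv; subst x; rewrite esym exy in nuv.
      by rewrite dO // -(cuo x xu); exact: cuP.
    * exact: dP.
  + have vu : v != u by rewrite eq_sym.
    by rewrite /f ffunE (negbTE vu) (cuo v vu).
  + move=> x xv; rewrite /f ffunE; case: eqVneq => [->//|xu].
    by rewrite dO // cuo.
Qed.

Theorem lemma3p3 (T : finType) (e : rel T) (k : nat)
  (c : {ffun T -> 'I_k}) (u v : T) (cu cv : {ffun T -> 'I_k}) :
  simple_graph e -> 0 < k -> proper_colouring e c ->
  1 < #|recol_at e c u| -> 1 < #|recol_at e c v| ->
  cu \in recol_at e c u -> cv \in recol_at e c v ->
  ~~ e u v ->
  1 < #|recol_at e cu v| /\ 1 < #|recol_at e cv u|.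
Proof.
move=> G _ cP hu hv cuI cvI nuv; split.
- exact: leq_trans hv (@key _ _ _ _ _ _ _ G cP cuI nuv).
- have nvu : ~~ e v u by case: G => esym _; rewrite esym.
  exact: leq_trans hu (@key _ _ _ _ _ _ _ G cP cvI nvu).
Qed.
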